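(* Let $G=(V,E,H)$ be a HEDG, $\mathbb{P}_V$ a probability distribution on $\mathcal{X}_V=\prod_{v\in V}\mathcal{X}_v$ (standard Borel spaces), $W\subseteq V$, $G_W=G^{\mathrm{marg}(W)}$ and $\mathbb{P}_W$ the marginal of $\mathbb{P}_V$ on $\mathcal{X}_W$. If $(G,\mathbb{P}_V)$ satisfies the directed global Markov property, then so does $(G_W,\mathbb{P}_W)$; and if $(G,\mathbb{P}_V)$ satisfies the general directed global Markov property, then so does $(G_W,\mathbb{P}_W)$.
   Context: HEDG $G=(V,E,H)$: $V$ finite, $E\subseteq V\times V$ (self-loops allowed), $H$ a simplicial complex on $V$ (contains singletons, closed under subsets); $v\leftrightarrow w$ for distinct $v,w$ with $\{v,w\}\in H$. $\mathrm{Anc}(v),\mathrm{Desc}(v)$ include $v$; $\mathrm{Sc}(v)=\mathrm{Anc}(v)\cap\mathrm{Desc}(v)$. Marginalization onto $W$, $G^{\mathrm{marg}(W)}$ (marginalizing out $U=V\setminus W$): node set $W$; $v_1\to v_2$ iff $G$ has a directed path $v_1\to u_1\to\cdots\to u_r\to v_2$ ($r\ge0$, $u_i\in U$); $F'\subseteq W$ is a hyperedge iff there is $F\in H$, $F\subseteq F'\cup U$, with each $v\in F'$ in $F\setminus U$ or reached by a directed path $u_1\to\cdots\to u_r\to v$ ($r\ge1$, $u_i\in U$, $u_1\in F$). Paths: node sequences (repetitions allowed) with consecutive nodes joined by $\to,\leftarrow,\leftrightarrow$; an intermediate node is a collider if both adjacent edges have an arrowhead at it. d-separation $X\perp^dY\mid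 Z$: every path between $X$ and $Y$ has an endnode in $Z$, or a collider not in $\mathrm{Anc}(Z)$, or a non-collider in $Z$. $\sigma$-separation $X\perp^\sigma Y\mid Z$: every path between $X$ and $Y$ has an endnode in $Z$, or a collider not in $\mathrm{Anc}(Z)$, or a non-collider $v_i\in Z$ with an adjacent path edge $v_i\to v_{i\pm1}$ pointing to a node outside $\mathrm{Sc}(v_i)$ (all notions in the respective HEDG). Directed global Markov property of $(G,\mathbb{P}_V)$: $X\perp^d_GY\mid Z$ implies conditional independence under $\mathbb{P}_V$ of the coordinates in $X$ and $Y$ given those in $Z$, for all $X,Y,Z\subseteq V$. General directed global Markov property: the same with $\perp^\sigma_G$ in place of $\perp^d_G$. *)

(* Defs.v *)
From HB Require Import structures.
From mathcomp Require Import all_boot all_order all_algebra.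
From mathcomp Require Import all_classical all_reals all_analysis.

Set Implicit Arguments.
Unset Strict Implicit.
Unset Printing Implicit Defensive.

Import Order.TTheory GRing.Theory Num.Theory.
Local Open Scope ring_scope.

(* A HEDG G = (V, E, H): V a finite type, E : rel V the directed edges
   (self-loops allowed), H a simplicial complex on V. *)
Definition is_hedg (V : finType) (H : {set {set V}}) : Prop :=
  (forall v : V, [set v] \in H) /\
  (forall F F' : {set V}, F' \subset F -> F \in H -> F' \in H).

Definition Anc (V : finType) (E : rel V) (v : V) : {set V} :=
  [set w | connect E w v].
Definition Desc (V : finType) (E : rel V) (v : V) : {set V} :=
  [set w | connect E v w].
Definition Sc (V : finType) (E : rel V) (v : V) : {set V} :=
  Anc E v :&: Desc E v.
Definition AncS (V : finType) (E : rel V) (Z : {set V}) : {set V} :=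
  \bigcup_(z in Z) Anc E z.

(* Kinds of edges along a path, oriented from the previous node a to the
   next node b:  Fwd : a -> b,  Bwd : a <- b,  Bi : a <-> b. *)
Inductive ekind := Fwd | Bwd | Bi.

Definition edge_ok (V : finType) (E : rel V) (H : {set {set V}})
    (k : ekind) (a b : V) : bool :=
  match k with
  | Fwd => E a b
  | Bwd => E b a
  | Bi => (a != b) && ([set a; b] \in H)
  end.

(* A path is a start node x0 together with a sequence of steps (k_i, v_i):
   the i-th step is an edge of kind k_i between v_{i-1} and v_i (v_0 = x0).
   Paths of length 0 (a single node) are allowed; nodes may repeat. *)
Definition pnode (V : finType) (x0 : V) (st : seq (ekind * V)) (i : nat) : V :=
  nth x0 (x0 :: map snd st) i.
Definition pkind (V : finType) (st : seq (ekind * V)) (i : nat) : ekind :=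
  nth Fwd (map fst st) i.

Definition is_path (V : finType) (E : rel V) (H : {set {set V}})
    (x0 : V) (st : seq (ekind * V)) : Prop :=
  forall i, (i < size st)%N ->
    edge_ok E H (pkind st i) (pnode x0 st i) (pnode x0 st i.+1).

Definition head_at_next (k : ekind) : bool :=
  match k with Fwd | Bi => true | Bwd => false end.
Definition head_at_prev (k : ekind) : bool :=
  match k with Bwd | Bi => true | Fwd => false end.

Definition is_fwd (k : ekind) : bool := if k is Fwd then true else false.
Definition is_bwd (k : ekind) : bool := if k is Bwd then true else false.

Definition collider (V : finType) (st : seq (ekind * V)) (i : nat) : bool :=
  head_at_next (pkind st i.-1) && head_at_prev (pkind st i).

Definition intermediate (V : finType) (st : seq (ekind * V)) (i : nat) : bool :=
  (0 < i)%N && (i < size st)%N.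

Definition path_between (V : finType) (E : rel V) (H : {set {set V}})
    (X Y : {set V}) (x0 : V) (st : seq (ekind * V)) : Prop :=
  is_path E H x0 st /\ x0 \in X /\ pnode x0 st (size st) \in Y.

Definition d_blocked (V : finType) (E : rel V) (Z : {set V})
    (x0 : V) (st : seq (ekind * V)) : Prop :=
  x0 \in Z \/ pnode x0 st (size st) \in Z \/
  (exists i, intermediate st i /\ collider st i /\
             pnode x0 st i \notin AncS E Z) \/
  (exists i, intermediate st i /\ ~~ collider st i /\ pnode x0 st i \in Z).

Definition sigma_blocked (V : finType) (E : rel V) (Z : {set V})
    (x0 : V) (st : seq (ekind * V)) : Prop :=
  x0 \in Z \/ pnode x0 st (size st) \in Z \/
  (exists i, intermediate st i /\ collider st i /\
             pnode x0 st i \notin AncS E Z) \/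
  (exists i, intermediate st i /\ ~~ collider st i /\ pnode x0 st i \in Z /\
     (
      is_bwd (pkind st i.-1) && (pnode x0 st i.-1 \notin Sc E (pnode x0 st i))
      \/
      is_fwd (pkind st i) && (pnode x0 st i.+1 \notin Sc E (pnode x0 st i)))).

Definition dsep (V : finType) (E : rel V) (H : {set {set V}})
    (X Y Z : {set V}) : Prop :=
  forall x0 st, path_between E H X Y x0 st -> d_blocked E Z x0 st.

Definition sigmasep (V : finType) (E : rel V) (H : {set {set V}})
    (X Y Z : {set V}) : Prop :=
  forall x0 st, path_between E H X Y x0 st -> sigma_blocked E Z x0 st.

Definition subW (V : finType) (W : {set V}) : finType := {v : V | v \in W}.

Definition margE (V : finType) (E : rel V) (W : {set V}) : rel (subW W) :=
  fun v1 v2 => `[< exists us : seq V,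
      path E (val v1) (rcons us (val v2)) /\ all (fun u => u \notin W) us >].

Definition margH (V : finType) (E : rel V) (H : {set {set V}}) (W : {set V})
    : {set {set subW W}} :=
  [set F' : {set subW W} | `[< exists F : {set V}, F \in H /\
      F \subset (val @: F') :|: ~: W /\
      forall v : subW W, v \in F' ->
        (val v \in F (* = F \ U, as v \in W *)) \/
        (exists (u1 : V) (us : seq V), u1 \in F /\ u1 \notin W /\
           all (fun u => u \notin W) us /\
           path E u1 (rcons us (val v))) >] ].

Local Open Scope classical_set_scope.

Section ProductSpace.
Context (V : Type) (dX : V -> measure_display)
        (X : forall v : V, measurableType (dX v)).

Definition dprod : Type := forall v : V, X v.

HB.instance Definition _ := Choice.on dprod.
HB.instance Definition _ := isPointed.Build dprod (fun v => point).

Definition cylinders (A : set V) : set (set dprod) :=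
  [set C | exists (v : V) (B : set (X v)),
     A v /\ measurable B /\ C = (fun x : dprod => x v) @^-1` B].

Definition sigma_coord (A : set V) : set (set dprod) :=
  <<s cylinders A >>.

Lemma dprod_measurable0 : sigma_coord setT set0.
Proof. exact: sigma_algebra0. Qed.

Lemma dprod_measurableC (A : set dprod) :
  sigma_coord setT A -> sigma_coord setT (~` A).
Proof. by move=> sA; rewrite -setTD; exact: sigma_algebraCD. Qed.

Lemma dprod_measurable_bigcup (F : (set dprod)^nat) :
  (forall i, sigma_coord setT (F i)) -> sigma_coord setT (\bigcup_i F i).
Proof. exact: sigma_algebra_bigcup. Qed.

Definition dprod_display : measure_display.
Proof. exact: default_measure_display. Qed.

HB.instance Definition _ := @isMeasurable.Build dprod_display dprod
  (sigma_coord setT) dprod_measurable0 dprod_measurableC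
  dprod_measurable_bigcup.

End ProductSpace.

(* Standard Borel space: Borel-isomorphic to a Borel subset of the reals
   (a bimeasurable bijection onto a Borel set B of R). *)
Definition standard_borel (R : realType) (d : measure_display)
    (T : measurableType d) : Prop :=
  exists (B : set R) (f : T -> R),
    measurable B /\ f @` setT = B /\ injective f /\
    measurable_fun setT f /\
    (forall A : set T, measurable A -> measurable (f @` A)).

Section CondIndep.
Context (R : realType) (V : finType) (dX : V -> measure_display)
        (X : forall v : V, measurableType (dX v)).

(* Conditional independence X_A _||_ X_B | X_C under P:
   for every event F in sigma(X_A) the conditional probability
   P(F | X_B, X_C) admits a sigma(X_C)-measurable version k, i.e.
   P(F \cap D) = \int_D k dP for every D in sigma(X_{B \cup C}). *)
Definition cond_indep (P : probability (dprod X) R) (A B C : {set V}) : Prop :=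
  forall F : set (dprod X), @sigma_coord V dX X [set v | v \in A] F ->
    exists k : dprod X -> R,
      (forall x, 0 <= k x <= 1) /\
      (forall O : set R, measurable O -> @sigma_coord V dX X [set v | v \in C] (k @^-1` O)) /\
      (forall D : set (dprod X), @sigma_coord V dX X [set v | v \in B :|: C] D ->
         P (F `&` D) = (\int[P]_(x in D) (k x)%:E)%E).

Definition directed_global_markov (E : rel V) (H : {set {set V}})
    (P : probability (dprod X) R) : Prop :=
  forall A B C : {set V}, dsep E H A B C -> cond_indep P A B C.

Definition general_directed_global_markov (E : rel V) (H : {set {set V}})
    (P : probability (dprod X) R) : Prop :=
  forall A B C : {set V}, sigmasep E H A B C -> cond_indep P A B C.

End CondIndep.

Definition restrX (V : finType) (dX : V -> measure_display)
    (X : forall v : V, measurableType (dX v)) (W : {set V}) :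
    forall w : subW W, measurableType (dX (val w)) :=
  fun w => X (val w).

Definition proj_to (V : finType) (dX : V -> measure_display)
    (X : forall v : V, measurableType (dX v)) (W : {set V}) :
    dprod X -> dprod (@restrX V dX X W) :=
  fun x w => x (val w).

Arguments subW {V} W.
Arguments margE {V} E W.
Arguments margH {V} E H W.
Arguments restrX {V dX} X W.
Arguments proj_to {V dX} X W.

(* Main.v *)
Require Import Defs.
From HB Require Import structures.
From mathcomp Require Import all_boot all_order all_algebra.
From mathcomp Require Import all_classical all_reals all_analysis.
From mathcomp Require Import measurable_realfun.

Set Implicit Arguments.
Unset Strict Implicit.
Unset Printing Implicit Defensive.
Import Order.TTheory GRing.Theory Num.Theory.

Module Aux.


Section Walk.
Variables (T : finType) (e : rel T) (Hs : {set {set T}}) (Z : {set T}) (sg : bool).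

Definition nok (w : T) (h bw hn fbn : bool) : bool :=
  if h && hn then w \in AncS e Z else (w \notin Z) || [&& sg, ~~ bw & ~~ fbn].

Fixpoint owalk (x : T) (h bw : bool) (st : seq (ekind * T)) : bool :=
  match st with
  | [::] => x \notin Z
  | (k, y) :: st' => [&& edge_ok e Hs k x y,
       nok x h bw (head_at_prev k) (is_fwd k && (y \notin Sc e x)) &
       owalk y (head_at_next k) (is_bwd k && (x \notin Sc e y)) st']
  end.

Definition hh (h : bool) (st : seq (ekind * T)) i :=
  if i is j.+1 then head_at_next (pkind st j) else h.
Definition bb (x : T) (bw : bool) (st : seq (ekind * T)) i :=
  if i is j.+1 then is_bwd (pkind st j) && (pnode x st j \notin Sc e (pnode x st i))
  else bw.
Definition lok (x : T) h bw (st : seq (ekind * T)) i :=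
  edge_ok e Hs (pkind st i) (pnode x st i) (pnode x st i.+1) &&
  nok (pnode x st i) (hh h st i) (bb x bw st i) (head_at_prev (pkind st i))
      (is_fwd (pkind st i) && (pnode x st i.+1 \notin Sc e (pnode x st i))).

Lemma pnode_cons (x : T) (k : ekind) (y : T) (st : seq (ekind * T)) i : (i <= size st)%N ->
  pnode x ((k, y) :: st) i.+1 = pnode y st i.
Proof.
move=> hi; rewrite /pnode /=; apply: set_nth_default.
by rewrite /= size_map ltnS.
Qed.

Lemma owalkP (x : T) h bw (st : seq (ekind * T)) : owalk x h bw st <->
  (forall i, (i < size st)%N -> lok x h bw st i) /\ pnode x st (size st) \notin Z.
Proof.
elim: st x h bw => [|[k y] st IH] x h bw /=.
  by split; [move=> H; split => // i | case].
have E0 : lok x h bw ((k, y) :: st) 0 =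
  edge_ok e Hs k x y && nok x h bw (head_at_prev k) (is_fwd k && (y \notin Sc e x)).
  by [].
have ES : forall i, (i < size st)%N ->
  lok x h bw ((k, y) :: st) i.+1 = lok y (head_at_next k) (is_bwd k && (x \notin Sc e y)) st i.
  move=> i hi; rewrite /lok /hh /bb.
  rewrite !pnode_cons //; last by apply: ltnW.
  case: i hi => [|j] hj //=.
  rewrite pnode_cons //; last by apply: ltnW; apply: ltnW.
rewrite pnode_cons // -/(owalk _ _ _ _).
split.
  move=> /and3P [h1 h2 /IH [h3 h4]]; split => // -[|i] hi.
    by rewrite E0 h1 h2.
  by rewrite ES //; apply: h3.
move=> [h1 h2]; apply/and3P; split.
- by have := h1 0 isT; rewrite E0 => /andP [].
- by have := h1 0 isT; rewrite E0 => /andP [].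
apply/IH; split => // i hi.
by rewrite -ES //; apply: h1.
Qed.

Definition blk (x0 : T) (st : seq (ekind * T)) := if sg then sigma_blocked e Z x0 st else d_blocked e Z x0 st.

Lemma owalk_iff (x0 : T) (st : seq (ekind * T)) : (x0 \notin Z) && owalk x0 false false st <->
  is_path e Hs x0 st /\ ~ blk x0 st.
Proof.
rewrite andbC; split.
  move=> /andP [/owalkP [h1 h2] hx0]; split.
    by move=> i hi; have /andP [] := h1 i hi.
  have nb : forall i, intermediate st i -> ~~ collider st i ->
     pnode x0 st i \in Z -> sg /\
     ~~ (is_bwd (pkind st i.-1) && (pnode x0 st i.-1 \notin Sc e (pnode x0 st i))) /\
     ~~ (is_fwd (pkind st i) && (pnode x0 st i.+1 \notin Sc e (pnode x0 st i))).
    move=> [|i] /andP [//= _ hi] hc hz.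
    have /andP [_] := h1 _ hi; rewrite /nok /=.
    move: hc; rewrite /collider /= => /negbTE ->.
    by rewrite hz /= => /and3P [-> -> ->].
  have cb : forall i, intermediate st i -> collider st i ->
     pnode x0 st i \in AncS e Z.
    move=> [|i] /andP [//= _ hi] hc.
    have /andP [_] := h1 _ hi; rewrite /nok /=.
    by move: hc; rewrite /collider /= => ->.
  rewrite /blk; case: sg nb => nb.
    case=> [|[|[[i [hi [hc hn]]]|[i [hi [hc [hz hor]]]]]]].
    - by rewrite (negbTE hx0).
    - by rewrite (negbTE h2).
    - by rewrite cb in hn.
    have [_ [n1 n2]] := nb i hi hc hz.
    by case: hor => hh'; [rewrite hh' in n1 | rewrite hh' in n2].
  case=> [|[|[[i [hi [hc hn]]]|[i [hi [hc hz]]]]]].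
  - by rewrite (negbTE hx0).
  - by rewrite (negbTE h2).
  - by rewrite cb in hn.
  by have [] := nb i hi hc hz.
move=> [hp hb].
have hx0 : x0 \notin Z.
  by apply/negP => hz; apply: hb; rewrite /blk; case: sg; left.
rewrite hx0 andbT; apply/owalkP; split; last first.
  by apply/negP => hz; apply: hb; rewrite /blk; case: sg; right; left.
move=> i hi; rewrite /lok hp //=.
case: i hi => [|i] hi.
  by rewrite /nok /= hx0.
have hint : intermediate st i.+1 by rewrite /intermediate.
rewrite /nok /=.
case hc: (head_at_next (pkind st i) && head_at_prev (pkind st i.+1)).
  apply/negPn/negP => hn; apply: hb; rewrite /blk; case: sg; right; right; left;
  by exists i.+1.
case hz: (pnode x0 st i.+1 \in Z) => //=.
have hc' : ~~ collider st i.+1 by rewrite /collider /= hc.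
move: hb; rewrite /blk; case: sg => hb /=; last first.
  by exfalso; apply: hb; right; right; right; exists i.+1.
apply/andP; split; apply/negP => hq; apply: hb; right; right; right; exists i.+1;
  (do 3 split => //); [left|right]; exact: hq.
Qed.

End Walk.


Section Marg.
Variables (V : finType) (E : rel V) (H : {set {set V}}) (W : {set V}).
Hypothesis hH : is_hedg H.
Variables (C : {set subW W}) (sg : bool).

Local Notation T := (subW W).
Local Notation EW := (margE E W).
Local Notation HW := (margH E H W).
Local Notation ZV := (val @: C).

Definition Ureach (a b : V) := exists us : seq V,
  path E a (rcons us b) /\ all (fun u => u \notin W) us.

Lemma margEP (a b : T) : EW a b <-> Ureach (val a) (val b).
Proof. by rewrite /margE; split => [/asboolP | h]; [|apply/asboolP]. Qed.

Lemma Ureach_edge a b : E a b -> Ureach a b.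
Proof. by move=> h; exists [::]; rewrite /= h. Qed.

Lemma Ureach_trans a b c : Ureach a b -> b \notin W -> Ureach b c -> Ureach a c.
Proof.
move=> [us1 [p1 a1]] hb [us2 [p2 a2]]; exists (us1 ++ b :: us2); split.
  by rewrite -cat_rcons rcons_cat cat_path last_rcons p1.
by rewrite all_cat a1 /= hb a2.
Qed.

Lemma inZV (w : T) : (val w \in ZV) = (w \in C).
Proof. by rewrite (mem_imset _ _ val_inj). Qed.

Lemma conn_aux (p : seq V) : forall (a b : T) (c : V),
  (c = val a \/ (c \notin W /\ Ureach (val a) c)) -> path E c p ->
  last c p = val b -> connect EW a b.
Proof.
elim: p => [|x p IH] a b c hc /=.
  move=> _ hcb; case: hc => [hca|[hcW _]].
    by have -> : a = b by apply: val_inj; rewrite -hca.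
  by move: hcW; rewrite hcb (valP b).
move=> /andP [hcx hp] hl.
case hx : (x \in W).
  pose x' : T := exist _ x hx.
  have hax : EW a x'.
    apply/margEP => /=; case: hc => [hca|[hcW hr]]; first by rewrite -hca; apply: Ureach_edge.
    by apply: Ureach_trans hr hcW (Ureach_edge hcx).
  apply: connect_trans (connect1 hax) _.
  by apply: (IH x' b x) => //; left.
apply: (IH a b x) => //; right; split; first by rewrite hx.
case: hc => [hca|[hcW hr]]; first by rewrite -hca; apply: Ureach_edge.
by apply: Ureach_trans hr hcW (Ureach_edge hcx).
Qed.

Lemma connW (a b : T) : connect E (val a) (val b) -> connect EW a b.
Proof.
move=> /connectP [p hp hl]; apply: (conn_aux (c := val a) (p := p)) => //; first by left.
Qed.

Lemma first_aux (p : seq V) : forall c, c \notin W -> path E c p ->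
  last c p \in W -> exists z : T, Ureach c (val z) /\ connect E (val z) (last c p).
Proof.
elim: p => [|x p IH] c hc /=; first by rewrite (negbTE hc).
move=> /andP [hcx hp] hl.
case hx : (x \in W).
  exists (exist _ x hx); split; first exact: Ureach_edge.
  by apply/connectP; exists p.
have [z [hr hz]] := IH x (negbT hx) hp hl.
by exists z; split => //; apply: Ureach_trans (Ureach_edge hcx) (negbT hx) hr.
Qed.

Lemma firstW u w : u \notin W -> connect E u w -> w \in W ->
  exists z : T, Ureach u (val z) /\ connect E (val z) w.
Proof.
move=> hu /connectP [p hp ->] hl; exact: first_aux.
Qed.

Lemma ScE (e : rel V) w v : (w \in Sc e v) = connect e w v && connect e v w.
Proof. by rewrite /Sc /Anc /Desc !inE. Qed.

Lemma ScEW (w v : T) : (w \in Sc EW v) = connect EW w v && connect EW v w.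
Proof. by rewrite /Sc /Anc /Desc !inE. Qed.

Lemma Sc_lift (a b : T) : val b \in Sc E (val a) -> b \in Sc EW a.
Proof. by rewrite ScE ScEW => /andP [h1 h2]; rewrite !connW. Qed.

Lemma AncSP (e : rel V) (Z : {set V}) w :
  reflect (exists2 z, z \in Z & connect e w z) (w \in AncS e Z).
Proof.
rewrite /AncS; apply: (iffP bigcupP) => [[z hz]|[z hz hc]].
  by rewrite /Anc inE => h; exists z.
by exists z => //; rewrite /Anc inE.
Qed.

Lemma AncSWP (w : T) :
  reflect (exists2 z, z \in C & connect EW w z) (w \in AncS EW C).
Proof.
rewrite /AncS; apply: (iffP bigcupP) => [[z hz]|[z hz hc]].
  by rewrite /Anc inE => h; exists z.
by exists z => //; rewrite /Anc inE.
Qed.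

Lemma AncS_lift (w : T) : val w \in AncS E ZV -> w \in AncS EW C.
Proof.
move=> /AncSP [z /imsetP [z' hz' ->] hc].
by apply/AncSWP; exists z' => //; apply: connW.
Qed.

Local Notation nokG := (nok E ZV sg).
Local Notation nokW := (nok EW C sg).
Local Notation owG := (owalk E H ZV sg).
Local Notation owW := (owalk EW HW C sg).

Definition dom (w : T) (hG bG hW bW : bool) := forall hn fbn : bool, (hn -> ~~ fbn) ->
  nokG (val w) hG bG hn fbn -> nokW w hW bW hn fbn.

Lemma dom_same (w : T) (h bG bW : bool) : (w \in C -> bW -> bG) -> dom w h bG h bW.
Proof.
move=> hb hn fbn _; rewrite /nok inZV.
case: (h && hn); first exact: AncS_lift.
case hC : (w \in C) => //= /and3P [-> h2 ->]; rewrite andbT.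
by apply/negP => hbW; move: h2; rewrite hb.
Qed.

Lemma mergeDom (w : T) (hG hW bW : bool) : nokW w hW bW true false -> (hW -> ~~ bW) ->
  dom w hG false hW bW.
Proof.
move=> hn0 hp hn fbn hf nG; have hA := @AncS_lift w.
move: hn0 nG hp hf hA; rewrite /nok inZV.
case: (w \in C); case: (w \in AncS EW C); case: (val w \in AncS E ZV);
  case: hW; case: hn; case: hG; case: bW; case: fbn; case: sg => //=;
  by move=> *; repeat match goal with h : is_true true -> _ |- _ => have := h isT; clear h end.
Qed.

Lemma domZ (w : T) (hG bG : bool) : w \in C -> dom w hG bG true false.
Proof.
move=> hC hn fbn hf; rewrite /nok inZV hC /=.
case: hn hf => hf.
  by move=> _; apply/AncSWP; exists w.
by rewrite !andbF /=; case: (hG) => //= /and3P [-> _ ->].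
Qed.

Lemma nok_fbn (w : V) (Z : {set V}) (h bw hn fbn fbn' : bool) :
  (fbn' -> fbn) -> nok E Z sg w h bw hn fbn -> nok E Z sg w h bw hn fbn'.
Proof.
move=> himp; rewrite /nok; case: (h && hn) => //.
case: (w \notin Z) => //= /and3P [-> -> hf] /=.
by apply/negP => /himp; rewrite (negbTE hf).
Qed.

Lemma nok_notZ (w : T) (h bw hn fbn : bool) : w \notin C -> ~~ (h && hn) -> nokW w h bw hn fbn.
Proof. by move=> hC hh; rewrite /nok (negbTE hh) hC. Qed.

Definition reachF (F : {set V}) (v : V) :=
  v \in F \/ exists2 f, f \in F & f \notin W /\ Ureach f v.

Lemma reachF_step F u v : reachF F u -> u \notin W -> Ureach u v -> reachF F v.
Proof.
move=> [hu|[f hf [hfW hr]]] huW hr'; right.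
  by exists u.
by exists f => //; split => //; apply: Ureach_trans hr huW hr'.
Qed.

Lemma margH_mk F (a b : T) : F \in H ->
  (forall f, f \in F -> [\/ f = val a, f = val b | f \notin W]) ->
  reachF F (val a) -> reachF F (val b) -> [set a; b] \in HW.
Proof.
move=> hF hsub ra rb; rewrite /margH inE; apply/asboolP; exists F; split => //; split.
  apply/fintype.subsetP => f hf; rewrite inE.
  case: (hsub f hf) => [->|->|hW]; last by rewrite inE hW orbT.
    by rewrite (mem_imset _ _ val_inj) !inE eqxx.
  by rewrite (mem_imset _ _ val_inj) !inE eqxx orbT.
move=> v; rewrite !inE => /orP [] /eqP ->.
  case: ra => [h|[f hf [hfW [us [hp hus]]]]]; [by left | right].
  by exists f, us.
case: rb => [h|[f hf [hfW [us [hp hus]]]]]; [by left | right].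
by exists f, us.
Qed.

Lemma Bi_mk F (a b : T) : a != b -> F \in H ->
  (forall f, f \in F -> [\/ f = val a, f = val b | f \notin W]) ->
  reachF F (val a) -> reachF F (val b) -> edge_ok EW HW Bi a b.
Proof. by move=> hab hF hs ra rb; rewrite /= hab; apply: margH_mk hs ra rb. Qed.

Lemma edge_lift k (a b : T) : edge_ok E H k (val a) (val b) -> edge_ok EW HW k a b.
Proof.
case: k => /=.
- by move=> h; apply/margEP/Ureach_edge.
- by move=> h; apply/margEP/Ureach_edge.
move=> /andP [hab hF]; apply: (@Bi_mk [set val a; val b]) => //.
- by move=> f; rewrite !inE => /orP [] /eqP ->; [constructor 1|constructor 2].
- by left; rewrite !inE eqxx.
by left; rewrite !inE eqxx orbT.
Qed.


Definition GOAL (t : V) (w0 : T) (hW bW : bool) :=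
  exists stW, owW w0 hW bW stW /\ val (last w0 (map snd stW)) = t.

Lemma goal_cons t (w0 w' : T) k (hW bW : bool) : edge_ok EW HW k w0 w' ->
  nokW w0 hW bW (head_at_prev k) (is_fwd k && (w' \notin Sc EW w0)) ->
  GOAL t w' (head_at_next k) (is_bwd k && (w0 \notin Sc EW w')) -> GOAL t w0 hW bW.
Proof.
by move=> he hn [stW [ho hl]]; exists ((k, w') :: stW); rewrite /= he hn ho.
Qed.

Definition Finv (w0 : T) (u : V) := exists F, [/\ F \in H,
  (forall f, f \in F -> f = val w0 \/ f \notin W), reachF F (val w0) & reachF F u].

Lemma Ureach_conn a b : Ureach a b -> connect E a b.
Proof. by move=> [us [hp _]]; apply/connectP; exists (rcons us b); rewrite ?last_rcons. Qed.

Lemma notW_notZV u : u \notin W -> u \notin ZV.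
Proof.
move=> hu; apply/negP => /imsetP [z _ hz]; by move: hu; rewrite hz (valP z).
Qed.

Lemma sub1 (u : V) (a b : T) : u \notin W ->
  forall f, f \in [set u] -> [\/ f = val a, f = val b | f \notin W].
Proof. by move=> hu f; rewrite inE => /eqP ->; constructor 3. Qed.

Lemma reach1 (u v : V) : u \notin W -> Ureach u v -> reachF [set u] v.
Proof. by move=> hu hr; right; exists u; rewrite ?inE. Qed.

Lemma pinvT b : true -> ~~ (false && b). Proof. by []. Qed.


Lemma sim (st : seq (ekind * V)) : forall (u : V) (hG bG : bool),
  owG u hG bG st -> last u (map snd st) \in W ->
  [/\ (forall (w0 : T) hW bW, val w0 = u -> dom w0 hG bG hW bW -> (hW -> ~~ bW) ->
         GOAL (last u (map snd st)) w0 hW bW),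
      (forall (w0 : T) hW bW, u \notin W -> Ureach (val w0) u -> w0 \notin C -> hG ->
         GOAL (last u (map snd st)) w0 hW bW),
      (forall (w0 : T) hW bW, u \notin W -> Ureach u (val w0) ->
         nokW w0 hW bW true false -> (hW -> ~~ bW) -> GOAL (last u (map snd st)) w0 hW bW) &
      (forall (w0 : T) hW bW, u \notin W -> Finv w0 u -> hG ->
         nokW w0 hW bW true false -> (hW -> ~~ bW) -> GOAL (last u (map snd st)) w0 hW bW)].
Proof.
elim: st => [|[k y] st IH] u hG bG.
  move=> /= hu ht; split.
  - move=> w0 hW bW hw0 _ _; exists [::]; split => //=.
    by subst u; rewrite -inZV.
  - by move=> w0 hW bW hu'; rewrite ht in hu'.
  - by move=> w0 hW bW hu'; rewrite ht in hu'.
  - by move=> w0 hW bW hu'; rewrite ht in hu'.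
move=> /= /and3P [e1 n1 o1] ht.
case: (IH y _ _ o1 ht) => iW iA iB iC.
have hB : forall (w0 : T) hW bW, u \notin W -> Ureach u (val w0) ->
    nokW w0 hW bW true false -> (hW -> ~~ bW) -> GOAL (last y (map snd st)) w0 hW bW.
  move=> w0 hW bW hu hr nw pw.
  case hy : (y \in W); last first.
    case: k e1 n1 o1 iW iA iB iC => e1 n1 o1 iW iA iB iC.
    - apply: iC => //; first by rewrite hy.
      exists [set u]; split => //; first by apply: hH.1.
      + by move=> f; rewrite inE => /eqP ->; right.
      + exact: reach1.
      + by apply: reach1 => //; apply: Ureach_edge.
    - apply: iB => //; first by rewrite hy.
      by apply: Ureach_trans hu hr; apply: Ureach_edge.
    - move: e1 => /= /andP [_ hF].
      apply: iC => //; first by rewrite hy.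
      exists [set u; y]; split => //.
      + by move=> f; rewrite !inE => /orP [] /eqP ->; right => //; rewrite hy.
      + by right; exists u; rewrite ?inE ?eqxx.
      + by left; rewrite !inE eqxx orbT.
  pose y' : T := exist _ y hy.
  case: k e1 n1 o1 iW iA iB iC => e1 n1 o1 iW iA iB iC.
  -
    case: (eqVneq w0 y') => [hEq|hNe].
      by apply: iW => //; [rewrite hEq | apply: mergeDom].
    apply: (goal_cons (k := Bi) (w' := y')).
    + apply: (@Bi_mk [set u]) => //; first exact: hH.1.
      * exact: sub1.
      * exact: reach1.
      * by apply: reach1 => //; apply: Ureach_edge.
    + exact: nw.
    + by apply: iW => //; apply: dom_same.
  -
    have hEy : EW y' w0 by apply/margEP; apply: Ureach_trans hu hr; apply: Ureach_edge.
    case hfix : ((y' \in C) && (u \in Sc E y)).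
      move/andP: hfix => [hyC hSc].
      have hcu : connect E u y by move: hSc; rewrite ScE => /andP [].
      have [z [hrz hzc]] := firstW hu hcu hy.
      have hzSc : z \in Sc EW y'.
        apply: Sc_lift; rewrite ScE hzc /=.
        exact: connect_trans (connect1 (e1 : E y u)) (Ureach_conn hrz).
      case: (eqVneq z y') => [hzy|hzy].
        case: (eqVneq w0 y') => [hw|hw].
          apply: iW => //; first by rewrite hw.
          by rewrite /= hSc; apply: mergeDom.
        apply: (goal_cons (k := Bi) (w' := y')).
        + apply: (@Bi_mk [set u]) => //; first exact: hH.1.
          * exact: sub1.
          * exact: reach1.
          * by apply: reach1 => //; rewrite -hzy.
        + exact: nw.
        + by apply: iW => //; apply: domZ.
      case: (eqVneq z w0) => [hzw|hzw].
        apply: (goal_cons (k := Bwd) (w' := y')) => //.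
        apply: iW => //; apply: dom_same => _ /=.
        by rewrite -hzw hzSc.
      apply: (goal_cons (k := Bi) (w' := z)).
      + apply: (@Bi_mk [set u]) => //; first by rewrite eq_sym.
        * exact: hH.1.
        * exact: sub1.
        * exact: reach1.
        * exact: reach1.
      + exact: nw.
      apply: (goal_cons (k := Bwd) (w' := y')) => /=.
      + by apply/margEP; apply: Ureach_trans hu hrz; apply: Ureach_edge.
      + by rewrite /nok /=; apply/AncSWP; exists y' => //; apply: connW.
      apply: iW => //; apply: dom_same => _ /=.
      by rewrite hzSc.
    apply: (goal_cons (k := Bwd) (w' := y')) => //.
    apply: iW => //; apply: dom_same => hyC /=.
    by move: hfix; rewrite hyC /= => ->.
  -
    move: (e1) => /= /andP [_ hF].
    have hsub : forall f, f \in [set u; y] -> [\/ f = val w0, f = val y' | f \notin W].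
      by move=> f; rewrite !inE => /orP [] /eqP ->; [constructor 3 | constructor 2].
    case: (eqVneq w0 y') => [hEq|hNe].
      by apply: iW => //; [rewrite hEq | apply: mergeDom].
    apply: (goal_cons (k := Bi) (w' := y')).
    + apply: (@Bi_mk [set u; y]) => //.
      * by right; exists u; rewrite ?inE ?eqxx.
      * by left; rewrite !inE eqxx orbT.
    + exact: nw.
    + by apply: iW => //; apply: dom_same.
split.
-
  move=> w0 hW bW hw0 hd pw; subst u.
  case hy : (y \in W).
    pose y' : T := exist _ y hy.
    apply: (goal_cons (k := k) (w' := y')).
    + exact: edge_lift.
    + apply: hd; first by case: (k).
      apply: nok_fbn n1 => /andP [-> hn] /=.
      by apply/negP => hS; move: hn; rewrite (@Sc_lift w0 y' hS).
    + apply: iW => //.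
      * apply: dom_same => _ /andP [-> hn] /=.
        by apply/negP => hS; move: hn; rewrite (@Sc_lift y' w0 hS).
      * by case: (k).
  case: k e1 n1 o1 iW iA iB iC => e1 n1 o1 iW iA iB iC.
  +
    case hwC : (w0 \in C).
      move: n1; rewrite /nok andbF inZV hwC /= => /and3P [hsg hbG hSc].
      rewrite negbK in hSc.
      have hcy : connect E y (val w0) by move: hSc; rewrite ScE => /andP [].
      have [z [hrz hzc]] := firstW (negbT hy) hcy (valP w0).
      have hzSc : z \in Sc EW w0.
        apply: Sc_lift; rewrite ScE hzc /=.
        exact: connect_trans (connect1 (e1 : E (val w0) y)) (Ureach_conn hrz).
      apply: (goal_cons (k := Fwd) (w' := z)).
      * by apply/margEP; apply: Ureach_trans (negbT hy) hrz; apply: Ureach_edge.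
      * rewrite /= hzSc /=; apply: hd => //.
        by rewrite /nok andbF inZV hwC /= hsg hbG.
      apply: iC => //; first by rewrite hy.
      * exists [set y]; split => //; first by apply: hH.1.
        - by move=> f; rewrite inE => /eqP ->; right; rewrite hy.
        - by apply: reach1 => //; rewrite hy.
        - by left; rewrite inE.
      * by rewrite /nok /=; apply/AncSWP; exists w0 => //; apply: connW.
    apply: iA => //; first by rewrite hy.
    * exact: Ureach_edge.
    * by rewrite hwC.
  +
    apply: iB => //; first by rewrite hy.
    * exact: Ureach_edge.
    * by apply: hd.
  +
    move: (e1) => /= /andP [_ hF].
    apply: iC => //; first by rewrite hy.
    * exists [set val w0; y]; split => //.
      - by move=> f; rewrite !inE => /orP [] /eqP ->; [left | right; rewrite hy].
      - by left; rewrite !inE eqxx.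
      - by left; rewrite !inE eqxx orbT.
    * by apply: hd.
-
  move=> w0 hW bW hu hr hwC hg.
  case hc : (head_at_prev k).
    move: n1; rewrite /nok hg hc /= => /AncSP [zz /imsetP [zz' hzz' ->] hczz].
    have [z1 [hrz hz1c]] := firstW hu hczz (valP zz').
    apply: (goal_cons (k := Fwd) (w' := z1)).
    * by apply/margEP; apply: Ureach_trans hu hrz.
    * by apply: nok_notZ; rewrite ?hwC ?andbF.
    apply: hB => //.
    by rewrite /nok /=; apply/AncSWP; exists zz' => //; apply: connW.
  case: k hc e1 n1 o1 iW iA iB iC => // _ e1 n1 o1 iW iA iB iC.
  case hy : (y \in W).
    pose y' : T := exist _ y hy.
    apply: (goal_cons (k := Fwd) (w' := y')).
    * by apply/margEP; apply: Ureach_trans hr hu _; apply: Ureach_edge.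
    * by apply: nok_notZ; rewrite ?hwC ?andbF.
    by apply: iW => //; apply: dom_same.
  apply: iA => //; first by rewrite hy.
  by apply: Ureach_trans hr hu _; apply: Ureach_edge.
- exact: hB.
-
  move=> w0 hW bW hu [F [hF hsub rw ru]] hg nw pw.
  have hsub2 : forall (b : T) f, f \in F -> [\/ f = val w0, f = val b | f \notin W].
    by move=> b f /hsub [] ?; [constructor 1 | constructor 3].
  case hc : (head_at_prev k).
    move: n1; rewrite /nok hg hc /= => /AncSP [zz /imsetP [zz' hzz' ->] hczz].
    have [z1 [hrz hz1c]] := firstW hu hczz (valP zz').
    case: (eqVneq z1 w0) => [hzw|hne].
      by apply: hB => //; rewrite -hzw.
    apply: (goal_cons (k := Bi) (w' := z1)).
    * apply: (@Bi_mk F) => //; first by rewrite eq_sym.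
      exact: hsub2.
      exact: reachF_step ru hu hrz.
    * exact: nw.
    apply: hB => //.
    by rewrite /nok /=; apply/AncSWP; exists zz' => //; apply: connW.
  case: k hc e1 n1 o1 iW iA iB iC => // _ e1 n1 o1 iW iA iB iC.
  have ry : reachF F y by apply: reachF_step ru hu (Ureach_edge e1).
  case hy : (y \in W).
    pose y' : T := exist _ y hy.
    case: (eqVneq w0 y') => [hEq|hNe].
      by apply: iW => //; [rewrite hEq | apply: mergeDom].
    apply: (goal_cons (k := Bi) (w' := y')).
    * by apply: (@Bi_mk F) => //; apply: hsub2.
    * exact: nw.
    by apply: iW => //; apply: dom_same.
  apply: iC => //; first by rewrite hy.
  by exists F; split.
Qed.

Lemma pnode_last (x : V) (st : seq (ekind * V)) :
  pnode x st (size st) = last x (map snd st).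
Proof.
rewrite /pnode -[size st](size_map snd) -[X in nth _ _ X]/((size (x :: map snd st)).-1).
by rewrite nth_last.
Qed.

Lemma pnode_lastW (x : T) (st : seq (ekind * T)) :
  pnode x st (size st) = last x (map snd st).
Proof.
rewrite /pnode -[size st](size_map snd) -[X in nth _ _ X]/((size (x :: map snd st)).-1).
by rewrite nth_last.
Qed.

Lemma sep_lift (A B : {set T}) :
  (forall x0 st, path_between EW HW A B x0 st -> blk EW C sg x0 st) ->
  (forall x0 st, path_between E H (val @: A) (val @: B) x0 st -> blk E ZV sg x0 st).
Proof.
move=> hsep x0 st [hp [hx0 hend]].
case: (pselect (blk E ZV sg x0 st)) => // hnb.
have /andP [hx0Z ho] := (proj2 (owalk_iff E H ZV sg x0 st)) (conj hp hnb).
move: hx0 => /imsetP [a ha hxa]; subst x0.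
move: hend; rewrite pnode_last => /imsetP [b hb hbe].
have hlW : last (val a) (map snd st) \in W by rewrite hbe (valP b).
case: (sim ho hlW) => iW _ _ _.
have [stW [hoW hlast]] : GOAL (last (val a) (map snd st)) a false false.
  by apply: iW => //; apply: dom_same.
exfalso.
have hnbW : ~ blk EW C sg a stW.
  have hh : (a \notin C) && owW a false false stW by rewrite -inZV hx0Z hoW.
  exact: (proj2 ((proj1 (owalk_iff EW HW C sg a stW)) hh)).
have hpW : is_path EW HW a stW.
  have hh : (a \notin C) && owW a false false stW by rewrite -inZV hx0Z hoW.
  exact: (proj1 ((proj1 (owalk_iff EW HW C sg a stW)) hh)).
apply: hnbW; apply: hsep; split => //; split => //.
rewrite pnode_lastW.
have -> : last a (map snd stW) = b by apply: val_inj; rewrite hlast hbe.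
exact: hb.
Qed.

End Marg.

Local Open Scope classical_set_scope.


Lemma preimage_gen (T1 T2 : Type) (S1 : set (set T1)) (G2 : set (set T2))
  (f : T1 -> T2) : sigma_algebra setT S1 ->
  (forall g, G2 g -> S1 (f @^-1` g)) -> forall g, <<s G2 >> g -> S1 (f @^-1` g).
Proof.
move=> [h0 hC hU] hG.
have hQ : sigma_algebra setT [set g | S1 (f @^-1` g)].
  split => /=.
  - by rewrite preimage_set0.
  - by move=> A hA; rewrite setTD preimage_setC -setTD; apply: hC.
  - by move=> F hF; rewrite preimage_bigcup; apply: hU.
exact: (smallest_sub hQ hG).
Qed.

Section Meas.
Context (V : Type) (dX : V -> measure_display) (X : forall v : V, measurableType (dX v)).
Local Notation SC := (@sigma_coord V dX X).

Lemma sc_mono (S1 S2 : set V) : S1 `<=` S2 ->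
  forall g, SC S1 g -> SC S2 g.
Proof.
move=> hS; apply: sub_sigma_algebra2 => g [v [B [hv [hB ->]]]].
by exists v, B; split => //; apply: hS.
Qed.

Lemma sc_sat (S : set V) g : SC S g ->
  forall x x' : dprod X, (forall v, S v -> x v = x' v) -> g x -> g x'.
Proof.
have hQ : sigma_algebra setT [set g : set (dprod X) | forall x x' : dprod X,
    (forall v, S v -> x v = x' v) -> g x -> g x'].
  split => /=.
  - by [].
  - move=> A hA x x' hxx' [_ nAx]; split => // hAx'; apply: nAx.
    by apply: (hA x') => // v hv; rewrite hxx'.
  - move=> F hF x x' hxx' [i _ hi]; exists i => //; exact: hF hxx' hi.
apply: (smallest_sub hQ) => g0 [v [B [hv [hB ->]]]] x x' hxx' /=.
by rewrite -(hxx' v hv).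
Qed.

End Meas.

Section MargM.
Context (V : finType) (dX : V -> measure_display) (X : forall v : V, measurableType (dX v))
  (W : {set V}).
Local Notation XW := (restrX X W).
Local Notation SCV := (@sigma_coord V dX X).
Local Notation SCW := (@sigma_coord (subW W) (fun w => dX (val w)) XW).
Local Notation proj := (proj_to X W).

Lemma proj_sc (S1 : set V) (S2 : set (subW W)) : (forall w, S2 w -> S1 (val w)) ->
  forall F, SCW S2 F -> SCV S1 (proj @^-1` F).
Proof.
move=> hS; apply: preimage_gen; first exact: smallest_sigma_algebra.
move=> g [w [B [hw [hB ->]]]].
apply: sub_sigma_algebra; exists (val w), B; split => //; first exact: hS.
Qed.

Definition ext (y : dprod XW) : dprod X := fun v =>
  match pselect (is_true (v \in W)) with
  | left h => y (exist _ v h)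
  | right _ => point
  end.

Lemma ext_val y (w : subW W) : ext y (val w) = y w.
Proof.
case: w => v h /=; rewrite /ext; case: pselect => [h'|nh].
  by rewrite (bool_irrelevance h' h).
by exfalso; apply: nh.
Qed.

Lemma ext_sc (S1 : set V) (S2 : set (subW W)) :
  (forall v, S1 v -> exists2 w, S2 w & v = val w) ->
  forall G, SCV S1 G -> SCW S2 (ext @^-1` G).
Proof.
move=> hS; apply: preimage_gen; first exact: smallest_sigma_algebra.
move=> g [v [B [hv [hB ->]]]].
case: (hS v hv) => w hw hvw; subst v.
apply: sub_sigma_algebra; exists w, B; split => //; split => //.
by apply/seteqP; split => y /=; rewrite ext_val.
Qed.


Lemma mproj : measurable_fun setT proj.
Proof.
move=> _ Y mY; rewrite setTI.
exact: (@proj_sc setT setT _ Y mY).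
Qed.

Lemma ci_transfer (R : realType) (P : probability (dprod X) R)
  (PW : probability (dprod XW) R)
  (hPW : forall B : set (dprod XW), measurable B -> PW B = P (proj @^-1` B))
  (A B C : {set subW W}) :
  cond_indep P (val @: A) (val @: B) (val @: C) -> cond_indep PW A B C.
Proof.
move=> hci F hF.
have hF0 : SCV [set v | v \in val @: A] (proj @^-1` F).
  by apply: proj_sc hF => w /=; rewrite (mem_imset _ _ val_inj).
have [k [k01 [kC kint]]] := hci _ hF0.
have hk : forall x, k (ext (proj x)) = k x.
  move=> x; have hs := kC [set k x] (measurable_set1 _).
  apply: (sc_sat hs (x := x)) => //= v /imsetP [c _ ->].
  by rewrite ext_val.
exists (fun y => k (ext y)); split; first by move=> y; apply: k01.
have kWm : forall O, measurable O -> SCW [set w | w \in C] ((fun y => k (ext y)) @^-1` O).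
  move=> O mO; apply: (@ext_sc [set v | v \in val @: C] _ _ (k @^-1` O)); last exact: kC.
  by move=> v /imsetP [c hc ->]; exists c.
split; first exact: kWm.
move=> D hD.
have mD : measurable D by exact: (sc_mono _ hD).
have mF : measurable F by exact: (sc_mono _ hF).
rewrite hPW; last exact: measurableI.
rewrite preimage_setI kint; last first.
  apply: proj_sc hD => w /=; rewrite inE => /orP [] hw; rewrite inE.
    by rewrite (mem_imset _ _ val_inj) hw.
  by apply/orP; right; rewrite (mem_imset _ _ val_inj).
have mg : measurable_fun D (EFin \o (fun y => k (ext y))).
  apply/measurable_EFinP => _ O mO; apply: measurableI => //.
  exact: (sc_mono _ (kWm O mO)).
have h0 : {in D, forall y, (0 <= (EFin \o (fun y => k (ext y))) y)%E}.
  by move=> y _; rewrite /= lee_fin; case/andP: (k01 (ext y)).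
have heq := ge0_integral_pushforward mproj P mD mg h0.
transitivity (\int[P]_(x in proj @^-1` D) (((EFin \o (fun y => k (ext y))) \o proj) x))%E.
  by apply: eq_integral => x _; rewrite /= hk.
rewrite -heq; apply: eq_measure_integral; first exact: mproj.
by move=> mp A' mA' _; transitivity (P (proj @^-1` A')) => //; exact: (esym (hPW _ mA')).
Qed.

End MargM.

End Aux.
Import Aux.

Unset Implicit Arguments.
Local Open Scope classical_set_scope.

Theorem mainTheorem19 (R : realType) (V : finType) (E : rel V)
  (H : {set {set V}}) (dX : V -> measure_display)
  (X : forall v : V, measurableType (dX v))
  (P : probability (dprod X) R) (W : {set V})
  (PW : probability (dprod (restrX X W)) R) :
  is_hedg H ->
  (forall v : V, standard_borel R (X v)) ->
  (* PW is the marginal of P on X_W *)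
  (forall B : set (dprod (restrX X W)), measurable B ->
     PW B = P (proj_to X W @^-1` B)) ->
  (directed_global_markov E H P ->
     directed_global_markov (margE E W) (margH E H W) PW) /\
  (general_directed_global_markov E H P ->
     general_directed_global_markov (margE E W) (margH E H W) PW).
Proof.
move=> hH _ hPW; split => hM A B C hsep.
  apply: (ci_transfer hPW); apply: hM.
  exact: (@sep_lift V E H W hH C false A B hsep).
apply: (ci_transfer hPW); apply: hM.
exact: (@sep_lift V E H W hH C true A B hsep).
Qed.
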